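(* Let $R$ be a finite commutative Frobenius ring of characteristic $2$, let $G=\{g_1,\dots,g_n\}$ be a finite abelian group of order $n$ and exponent $2$ with a fixed listing of its elements, let $v_1\neq v_2$ be elements of $RG$, and let $A$ be an $n\times n$ reverse circulant matrix over $R$. Let $C_\sigma$ be the code over $R$ generated by $$M(\sigma)=\left(\, I_{2n} \;\middle|\; \begin{matrix} \sigma(v_1) & \sigma(v_2)+A\\ \sigma(v_2)+A & \sigma(v_1)\end{matrix}\,\right).$$ If $\sigma(v_1)$ and $\sigma(v_2)$ are circulant matrices and $\sigma((v_1+v_2)^2)+A^2=I_n$, then $C_\sigma$ is a self-dual code of length $4n$.
   Context: For $v=\sum_{g\in G}\alpha_g g\in RG$, $\sigma(v)$ is the $n\times n$ matrix over $R$ whose $(i,j)$ entry is $\alpha_{g_i^{-1}g_j}$. An $n\times n$ matrix $(a_{ij})$ is circulant if $a_{ij}$ depends only on $(j-i)\bmod n$, and reverse circulant if $a_{ij}$ depends only on $(i+j)\bmod n$. The code generated by a matrix is the $R$-submodule spanned by its rows; it is self-dual if it equals its dual with respect to the Euclidean inner product $\langle x,y\rangle=\sum_i x_iy_i$. *)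

(* Defs.v *)
From HB Require Import structures.
From mathcomp Require Import all_boot all_order all_fingroup all_algebra all_solvable.
From mathcomp Require Import algC.
Set Implicit Arguments. Unset Strict Implicit. Unset Printing Implicit Defensive.
Import GRing.Theory.
Local Open Scope ring_scope.

(* Finite commutative Frobenius ring: admits a generating character, i.e. an
   additive character chi : (R,+) -> C^* whose kernel contains no nonzero
   ideal (for a commutative ring: no nonzero principal ideal aR). *)
Definition frobenius_ring (R : finComNzRingType) : Prop :=
  exists chi : R -> algC,
    [/\ chi 0 = 1,
        forall x y : R, chi (x + y) = chi x * chi y &
        forall a : R, a != 0 -> exists x : R, chi (a * x) != 1].

Definition groupring (R : Type) (gT : finGroupType) := {ffun gT -> R}.

Definition gr_mul (R : finComNzRingType) (gT : finGroupType)
  (a b : {ffun gT -> R}) : {ffun gT -> R} :=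
  [ffun h => \sum_(x : gT) a x * b (x^-1 * h)%g].

Definition sigma (R : finComNzRingType) (gT : finGroupType) (n : nat)
  (g : 'I_n -> gT) (v : {ffun gT -> R}) : 'M[R]_n :=
  \matrix_(i < n, j < n) v ((g i)^-1 * g j)%g.

Definition circulant (R : Type) (n : nat) (A : 'M[R]_n) : Prop :=
  forall i j k l : 'I_n, ((j + n - i) %% n = (l + n - k) %% n)%N -> A i j = A k l.

Definition reverse_circulant (R : Type) (n : nat) (A : 'M[R]_n) : Prop :=
  forall i j k l : 'I_n, ((i + j) %% n = (k + l) %% n)%N -> A i j = A k l.

Definition in_code (R : finComNzRingType) (m N : nat) (M : 'M[R]_(m, N))
  (c : 'rV[R]_N) : Prop := exists x : 'rV[R]_m, c = x *m M.

Definition euclid_ip (R : finComNzRingType) (N : nat) (x y : 'rV[R]_N) : R :=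
  \sum_(i < N) x 0 i * y 0 i.

Definition self_dual_code (R : finComNzRingType) (m N : nat) (M : 'M[R]_(m, N))
  : Prop :=
  forall c : 'rV[R]_N,
    in_code M c <-> (forall d : 'rV[R]_N, in_code M d -> euclid_ip c d = 0).

(* Main.v *)
Require Import Defs.
From HB Require Import structures.
From mathcomp Require Import all_boot all_order all_fingroup all_algebra all_solvable.
Import GRing.Theory.
Local Open Scope ring_scope.

Lemma e1 (V : zmodType) (i j k : V) : j - (i + j - k) = k - i.
Proof. by rewrite opprB opprD addrCA [j + _]addrCA subrr addr0. Qed.
Lemma e2 (V : zmodType) (i j k : V) : (i + j - k) - i = j - k .
Proof. by rewrite [i + j]addrC addrAC addrK. Qed.

Lemma e3 (V : zmodType) (i j k : V) : i + (k + (j - i)) = k + j.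
Proof. by rewrite addrCA [i + _]addrC subrK. Qed.
Lemma e4 (V : zmodType) (i j k : V) : k + (j - i) - j = k - i.
Proof. by rewrite addrA addrAC addrK. Qed.

Lemma zp_sub (n : nat) (i j : 'I_n.+1) : val (j - i) = ((j + n.+1 - i) %% n.+1)%N.
Proof. by rewrite /= modnDmr addnBA // ltnW. Qed.

Lemma circ_eq (R : Type) n (C : 'M[R]_n.+1) : circulant C ->
  forall i j k l : 'I_n.+1, j - i = l - k -> C i j = C k l.
Proof. by move=> hC i j k l e; apply: hC; rewrite -!zp_sub e. Qed.

Lemma rev_eq (R : Type) n (C : 'M[R]_n.+1) : reverse_circulant C ->
  forall i j k l : 'I_n.+1, i + j = k + l -> C i j = C k l.
Proof. by move=> hC i j k l e; apply: hC; rewrite -[((i + j) %% _)%N]/(val (i + j)) e. Qed.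

Lemma circ_comm (R : comPzRingType) n (C D : 'M[R]_n) :
  circulant C -> circulant D -> C *m D = D *m C.
Proof.
case: n C D => [|n] C D hC hD; first by apply/matrixP => -[].
apply/matrixP => i j; rewrite !mxE.
have hinj : injective (fun k : 'I_n.+1 => i + j - k) by move=> x y /addrI/oppr_inj.
rewrite (reindex_inj hinj) /=.
apply: eq_bigr => k _; rewrite mulrC; congr (_ * _).
  by apply: circ_eq => //; rewrite e1.
by apply: circ_eq => //; rewrite e2.
Qed.

Lemma circ_rev (R : comPzRingType) n (C A : 'M[R]_n) :
  circulant C -> reverse_circulant A -> C *m A = A *m C^T.
Proof.
case: n C A => [|n] C A hC hA; first by apply/matrixP => -[].
apply/matrixP => i j; rewrite !mxE.
rewrite [RHS](reindex_inj (addIr (j - i))) /=; symmetry.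
apply: eq_bigr => k _; rewrite mxE [RHS]mulrC; congr (_ * _).
  by apply: rev_eq => //; rewrite e3.
by apply: circ_eq => //; rewrite e4.
Qed.

Lemma rev_sym (R : Type) n (A : 'M[R]_n) : reverse_circulant A -> A^T = A.
Proof. move=> hA; apply/matrixP => i j; rewrite mxE; apply: hA; by rewrite addnC. Qed.

Lemma sigma_sym (R : finComNzRingType) (gT : finGroupType) n (g : 'I_n -> gT) (v : {ffun gT -> R}) :
  exponent [set: gT] = 2%N -> (sigma g v)^T = sigma g v.
Proof.
move=> hE; have inv : forall x : gT, (x^-1 = x)%g.
  move=> x; have := expg_exponent (in_setT x); rewrite hE expgS expg1 => e.
  by rewrite -[RHS](mulKg x x) e mulg1.
apply/matrixP => i j; rewrite !mxE; congr (v _).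
by rewrite -[RHS]inv invMg invgK.
Qed.

Lemma sigma_add (R : finComNzRingType) (gT : finGroupType) n (g : 'I_n -> gT) (v w : {ffun gT -> R}) :
  sigma g (v + w) = sigma g v + sigma g w.
Proof. by apply/matrixP => i j; rewrite !mxE ffunE. Qed.

Lemma sigma_mul (R : finComNzRingType) (gT : finGroupType) n (g : 'I_n -> gT) (v w : {ffun gT -> R}) :
  bijective g -> sigma g (gr_mul v w) = sigma g v *m sigma g w.
Proof.
case=> g' gK g'K.
apply/matrixP => i j; rewrite !mxE ffunE.
rewrite (reindex (fun k => (g i)^-1 * g k)%g) /=.
  apply: eq_bigr => k _; rewrite !mxE; congr (_ * w _).
  by rewrite invMg invgK mulgA mulgK.
exists (fun x => g' (g i * x)%g) => [k _|x _]; first by rewrite mulKVg gK.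
by rewrite g'K mulKg.
Qed.

Lemma char2_opp (R : pzRingType) : 2%:R = 0 :> R -> forall m n (M : 'M[R]_(m,n)), -M = M.
Proof.
move=> h2 m n M; apply/matrixP => i j; rewrite mxE.
have H : M i j + M i j = 0 by rewrite -mulr2n -mulr_natr h2 mulr0.
by apply/eqP; rewrite eq_sym -addr_eq0 H.
Qed.
Arguments char2_opp {R} h2 {m n} M.

Lemma ip (R : finComNzRingType) N (c d : 'rV[R]_N) : euclid_ip c d = (c *m d^T) 0 0.
Proof. by rewrite /euclid_ip [RHS]mxE; apply: eq_bigr => i _; rewrite mxE. Qed.

Lemma sd (R : finComNzRingType) m (B : 'M[R]_m) : 2%:R = 0 :> R -> B^T = B ->
  B *m B = 1%:M -> self_dual_code (row_mx (1%:M : 'M[R]_m) B).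
Proof.
move=> h2 hT hB.
set M := row_mx _ _.
have MM : M *m M^T = 0.
  by rewrite tr_row_mx mul_row_col trmx1 mul1mx hT hB -{1}(char2_opp h2 1%:M) addNr.
move=> c; split.
  case=> x -> d [y ->]; rewrite ip trmx_mul !mulmxA -(mulmxA x) MM mulmx0 mul0mx mxE //.
move=> hc.
have cM : c *m M^T = 0.
  apply/rowP => i; rewrite [RHS]mxE.
  have := hc (delta_mx 0 i *m M) (ex_intro _ _ erefl).
  by rewrite ip trmx_mul mulmxA trmx_delta -colE mxE.
move: cM; rewrite -(hsubmxK c) tr_row_mx mul_row_col trmx1 mulmx1 hT.
move/eqP; rewrite addr_eq0 => /eqP e.
exists (lsubmx c); rewrite mul_mx_row mulmx1; congr row_mx.
by rewrite e mulNmx -mulmxA hB mulmx1 char2_opp.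
Qed.

Lemma z1 (V : zmodType) (x y a p q : V) : p + p = 0 -> q + q = 0 ->
  x + p + (p + y) + a = x + (y + q + (q + a)).
Proof.
move=> hp hq.
by rewrite addrA -(addrA x) hp addr0 [y + q + _]addrA -(addrA y q) hq addr0 addrA.
Qed.

Theorem mainTheorem6 (R : finComNzRingType) (gT : finGroupType) (n : nat)
  (g : 'I_n -> gT) (v1 v2 : {ffun gT -> R}) (A : 'M[R]_n) :
  frobenius_ring R ->
  (2%:R : R) = 0 ->
  abelian [set: gT] ->
  exponent [set: gT] = 2%N ->
  bijective g ->
  v1 != v2 ->
  reverse_circulant A ->
  circulant (sigma g v1) ->
  circulant (sigma g v2) ->
  sigma g (gr_mul (v1 + v2) (v1 + v2)) + A *m A = 1%:M ->
  self_dual_code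
    (row_mx (1%:M : 'M[R]_(n + n))
       (block_mx (sigma g v1) (sigma g v2 + A)
                 (sigma g v2 + A) (sigma g v1))).
Proof.
move=> _ h2 _ hE hg _ hA h1 h2c hyp.
have c2 : forall m k (X : 'M[R]_(m, k)), X + X = 0.
  by move=> m k X; rewrite -{1}(char2_opp h2 X) addNr.
rewrite sigma_mul // sigma_add in hyp.
set S1 := sigma g v1 in h1 hyp *; set S2 := sigma g v2 in h2c hyp *.
have T1 : S1^T = S1 by apply: sigma_sym.
have T2 : S2^T = S2 by apply: sigma_sym.
have TA : A^T = A by apply: rev_sym.
have C12 : S2 *m S1 = S1 *m S2 by apply: circ_comm.
have C1A : A *m S1 = S1 *m A by rewrite [RHS]circ_rev // T1.
have C2A : A *m S2 = S2 *m A by rewrite [RHS]circ_rev // T2.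
have D : S1 *m S1 + (S2 + A) *m (S2 + A) = 1%:M.
  by rewrite -hyp !mulmxDr !mulmxDl C12 C2A; apply: esym; apply: z1; apply: c2.
have O : S1 *m (S2 + A) + (S2 + A) *m S1 = 0.
  by rewrite !mulmxDr !mulmxDl C12 C1A addrACA (c2 _ _ (S1 *m S2)) (c2 _ _ (S1 *m A)) addr0.
apply: sd => //.
  have TSA : (S2 + A)^T = S2 + A by rewrite -{2}T2 -{2}TA; apply/matrixP => i j; rewrite !mxE.
  by rewrite tr_block_mx TSA T1.
rewrite mulmx_block D O [X in block_mx _ _ X _]addrC O [X in block_mx _ _ _ X]addrC D.
by rewrite scalar_mx_block.
Qed.
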